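(* Let $\Psi\in\Lambda'$ satisfy ${}^{\gamma}\Psi=\Psi$ and $\det\Psi\in\mathbb{C}^*$ (a nonzero complex constant). Then there exists $\alpha\in\mathbb{C}^*$ such that $\Psi=\begin{pmatrix}\alpha&0\\0&\overline{\alpha}\end{pmatrix}$.
   Context: Fix an odd integer $n=2m+1\ge3$, variables $a,b$, and $T=ab$. Let $\Lambda'$ be the group of matrices $M=\begin{pmatrix}P(T)& a^nQ(T)\\ b^nS(T)& R(T)\end{pmatrix}$ with $P,Q,R,S\in\mathbb{C}[T,T^{-1}]$ and $\det M=cT^k$ for some $c\in\mathbb{C}^*$, $k\in\mathbb{Z}$. For such $M$ define ${}^{\gamma}M=\begin{pmatrix}\overline{R}(T)& a^n\overline{S}(T)\\ b^n\overline{Q}(T)& \overline{P}(T)\end{pmatrix}$, where $\overline{P}$ denotes the Laurent polynomial obtained by complex-conjugating the coefficients of $P$. *)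

(* Defs.v *)
From HB Require Import structures.
From mathcomp Require Import all_boot all_order all_algebra.
Set Implicit Arguments. Unset Strict Implicit. Unset Printing Implicit Defensive.
Import Order.TTheory GRing.Theory Num.Theory.
Local Open Scope ring_scope.

(* A Laurent polynomial is represented by a pair
   (k, p) with k : nat and p : {poly C}, standing for T^(-k) * p(T).
   Two representations denote the same Laurent polynomial iff [leq_eq] holds. *)
Definition laurent (C : numClosedFieldType) := (nat * {poly C})%type.

Section Laurent.
Variable C : numClosedFieldType.
Implicit Types x y : laurent C.

(* semantic equality: T^(-k1) p1 = T^(-k2) p2  <=>  p1 * T^k2 = p2 * T^k1 *)
Definition lequiv x y : Prop := x.2 * 'X^(y.1) = y.2 * 'X^(x.1).

Definition lconst (c : C) : laurent C := (0%N, c%:P).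
Definition lzero : laurent C := lconst 0.
Definition lmonom (m : int) : laurent C :=
  match m with
  | Posz k => (0%N, 'X^k)
  | Negz k => (k.+1, 1)
  end.
Definition ladd x y : laurent C := ((x.1 + y.1)%N, x.2 * 'X^(y.1) + y.2 * 'X^(x.1)).
Definition lopp x : laurent C := (x.1, - x.2).
Definition lmul x y : laurent C := ((x.1 + y.1)%N, x.2 * y.2).
Definition lconj x : laurent C := (x.1, map_poly (@Num.conj C) x.2).

(* A matrix M = [[P(T), a^n Q(T)], [b^n S(T), R(T)]] (with T = ab) is encoded
   by its four Laurent entries (P, Q, S, R); this encoding is faithful since the
   entries are determined by M. *)
Record mat2 := Mat2 { mP : laurent C; mQ : laurent C; mS : laurent C; mR : laurent C }.

(* det M = P R - a^n b^n Q S = P R - T^n Q S *)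
Definition ldet (n : nat) (M : mat2) : laurent C :=
  ladd (lmul (mP M) (mR M)) (lopp (lmul (lmul (lmonom (Posz n)) (mQ M)) (mS M))).

Definition in_Lambda' (n : nat) (M : mat2) : Prop :=
  exists (c : C) (k : int), c != 0 /\ lequiv (ldet n M) (lmul (lconst c) (lmonom k)).

(* gamma M = [[Rbar, a^n Sbar], [b^n Qbar, Pbar]] *)
Definition gamma (M : mat2) : mat2 :=
  Mat2 (lconj (mR M)) (lconj (mS M)) (lconj (mQ M)) (lconj (mP M)).

Definition mequiv (M N : mat2) : Prop :=
  [/\ lequiv (mP M) (mP N), lequiv (mQ M) (mQ N),
      lequiv (mS M) (mS N) & lequiv (mR M) (mR N)].

End Laurent.

(* Main.v *)
Require Import Defs.
From HB Require Import structures.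
From mathcomp Require Import all_boot all_order all_algebra.
From mathcomp Require Import ring zify.
Import Order.TTheory GRing.Theory Num.Theory.
Local Open Scope ring_scope.

Section Aux.
Variable C : numClosedFieldType.
Local Notation cj := (map_poly (@Num.conj C)).

Lemma cjK (p : {poly C}) : cj (cj p) = p.
Proof. by apply/polyP => i; rewrite !coef_map /= conjCK. Qed.

Lemma rhs_nz (c : C) w i : (c%:P * 'X^w)`_i != 0 -> i = w.
Proof.
rewrite coefMXn coefC; case: (ltnP i w) => [_|le]; first by rewrite eqxx.
have [e|ne] := eqVneq (i - w)%N 0%N; first by move=> _; lia.
by rewrite eqxx.
Qed.

Lemma decomp (p : {poly C}) : p != 0 -> exists a p1, p = p1 * 'X^a /\ p1`_0 != 0.
Proof.
move=> pn0; have [a [p1 Hr Hp]] := multiplicity_XsubC p 0.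
exists a, p1; split; first by rewrite Hp subr0.
move: Hr; rewrite pn0 /= /root horner_coef0 //.
Qed.

Lemma cjprod (p1 : {poly C}) : p1`_0 != 0 ->
  [/\ (p1 * cj p1)`_0 != 0, size (p1 * cj p1) = ((size p1).*2.-1)%N,
      lead_coef (p1 * cj p1) != 0 & (0 < size p1)%N].
Proof.
move=> h0.
have pn0 : p1 != 0 by apply: contraNneq h0 => ->; rewrite coef0.
have cn0 : cj p1 != 0 by rewrite -size_poly_eq0 size_map_poly size_poly_eq0.
split.
- by rewrite coef0M coef_map /= mul_conjC_eq0.
- by rewrite size_mul // size_map_poly -addnn.
- by rewrite lead_coefM lead_coef_map mul_conjC_eq0 lead_coef_eq0.
- by rewrite size_poly_gt0.
Qed.

Lemma key (F G : {poly C}) u v w c :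
  F`_0 != 0 -> G`_0 != 0 -> lead_coef F != 0 -> lead_coef G != 0 ->
  (u < v)%N -> (u + (size F).-1 != v + (size G).-1)%N ->
  F * 'X^u - G * 'X^v = c%:P * 'X^w -> False.
Proof.
move=> F0 G0 LF LG uv ne E.
have sF : (0 < size F)%N by rewrite size_poly_gt0 -lead_coef_eq0.
have sG : (0 < size G)%N by rewrite size_poly_gt0 -lead_coef_eq0.
have eF : size F = (size F).-1.+1 by rewrite prednK.
have eG : size G = (size G).-1.+1 by rewrite prednK.
have uw : u = w.
  apply: (@rhs_nz c); rewrite -E coefB !coefMXn ltnn uv subnn subr0 //.
case: (ltngtP (u + (size F).-1) (v + (size G).-1)) => lt; last by rewrite lt eqxx in ne.
- have : (c%:P * 'X^w)`_(v + (size G).-1) != 0.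
    rewrite -E coefB !coefMXn.
    have -> : (v + (size G).-1 < v)%N = false by lia.
    have -> : (v + (size G).-1 < u)%N = false by lia.
    rewrite nth_default; last by move: lt eF; set x := size F; lia.
    by rewrite add0r oppr_eq0 addKn.
  move/rhs_nz; lia.
- have : (c%:P * 'X^w)`_(u + (size F).-1) != 0.
    rewrite -E coefB !coefMXn.
    have -> : (u + (size F).-1 < u)%N = false by lia.
    case: ltnP => _; first by rewrite subr0 addKn.
    rewrite (@nth_default _ _ G); last by lia.
    by rewrite subr0 addKn.
  move/rhs_nz; lia.
Qed.


Lemma alg (p pb q qb r s c xn xp xq xr xs : {poly C}) :
  r * xp = pb * xr -> s * xq = qb * xs ->
  (p * r * (xq * xs) + - (xn * q * s) * (xp * xr)) * 1 = c * (xp * xr * (xq * xs)) ->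
  (p * pb * (xq * xq) - q * qb * (xn * (xp * xp))) * (xr * xs)
    = c * (xp * xp * (xq * xq)) * (xr * xs).
Proof.
move=> h1 h2 h3.
transitivity (p*(pb*xr)*(xq*xq*xs) - xn*q*(qb*xs)*(xp*xp*xr)); first by ring.
rewrite -h1 -h2.
transitivity (xp*xq*((p * r * (xq * xs) + - (xn * q * s) * (xp * xr)) * 1)); first by ring.
rewrite h3; ring.
Qed.

Lemma Xn_neq0 k : ('X^k : {poly C}) != 0.
Proof. by rewrite monic_neq0 // monicXn. Qed.

End Aux.
Arguments alg {C} [p pb q qb r s c xn xp xq xr xs].
Arguments Xn_neq0 {C}.
Arguments decomp {C} [p].
Arguments cjprod {C} [p1].
Arguments key {C} [F G u v w c].
Arguments rhs_nz {C}.

Theorem lemma3p4 (C : numClosedFieldType) (m : nat) (Psi : mat2 C) :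
  let n := m.*2.+1 in
  (0 < m)%N ->
  in_Lambda' n Psi ->
  mequiv (gamma Psi) Psi ->
  (exists c : C, c != 0 /\ lequiv (ldet n Psi) (lconst c)) ->
  exists alpha : C, alpha != 0 /\
    mequiv Psi (Mat2 (lconst alpha) (lzero C) (lzero C) (lconst (alpha^*))).
Proof.
case: Psi => [[kp p] [kq q] [ks s] [kr r]] n m0 _ [hP hQ _ _] [c [cn0 hdet]].
rewrite /lequiv /= in hP hQ.
rewrite /ldet /ladd /lmul /lopp /lmonom /lconst /lequiv /= in hdet.
rewrite !exprD !expr0 !mul1r in hdet.
have Rc : r * 'X^kp = map_poly (@Num.conj C) p * 'X^kr.
  by have := congr1 (map_poly (@Num.conj C)) hP; rewrite !rmorphM /= !map_polyXn cjK.
have Sc : s * 'X^kq = map_poly (@Num.conj C) q * 'X^ks.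
  by have := congr1 (map_poly (@Num.conj C)) hQ; rewrite !rmorphM /= !map_polyXn cjK.
have F0 : p * map_poly (@Num.conj C) p * 'X^(kq+kq)
   - q * map_poly (@Num.conj C) q * 'X^(n+(kp+kp)) = c%:P * 'X^(kp+kp+(kq+kq)).
  apply: (mulIf (Xn_neq0 (kr+ks))).
  have := alg Rc Sc hdet.
  by rewrite !exprD.
set cj := map_poly (@Num.conj C) in Rc Sc F0 *.
have cjM : forall u v : {poly C}, cj (u * v) = cj u * cj v.
  by move=> u v; rewrite /cj rmorphM.
have cjX : forall k, cj 'X^k = 'X^k by move=> k; rewrite /cj map_polyXn.
have [q0|qn0] := eqVneq q 0.
- subst q.
  have s0 : s = 0.
    apply/eqP; rewrite -(mulIr_eq0 _ (mulIf (Xn_neq0 kq))) Sc /cj rmorph0 mul0r //.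
  subst s.
  rewrite mul0r mul0r subr0 in F0.
  have F1 : p * cj p = c%:P * 'X^(kp+kp).
    by apply: (mulIf (Xn_neq0 (kq+kq))); rewrite F0 -mulrA -exprD.
  have pn0 : p != 0.
    apply: contraNneq cn0 => p0; move: F1; rewrite p0 !mul0r => /esym/eqP.
    by rewrite mulf_eq0 (negbTE (Xn_neq0 _)) orbF polyC_eq0.
  have [a [p1 [Hp p10]]] := decomp pn0.
  have [c0 sz l0 sp] := cjprod p10.
  have E2 : p1 * cj p1 * 'X^(a+a) = c%:P * 'X^(kp+kp).
    by rewrite -F1 Hp cjM cjX exprD; ring.
  have aeq : (a + a = kp + kp)%N.
    by apply: (rhs_nz c); rewrite -E2 coefMXn ltnn subnn.
  have akp : a = kp by lia.
  subst a.
  have E3 := mulIf (Xn_neq0 _) E2.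
  have s1 : size p1 = 1%N.
    have := congr1 (fun z : {poly C} => size z) E3; rewrite sz size_polyC cn0 /=; lia.
  have P1 : p1 = (p1`_0)%:P by apply: size1_polyC; rewrite s1.
  exists p1`_0; split => //.
  split; rewrite /lequiv /lconst /=.
  + by rewrite Hp expr0 mulr1 -P1.
  + by rewrite !mul0r.
  + by rewrite !mul0r.
  + apply: (mulIf (Xn_neq0 kp)); rewrite expr0 mulr1 Rc Hp cjM cjX P1 /cj map_polyC /=.
    by rewrite -P1 mulrAC.
- have [b [q1 [Hq q10]]] := decomp qn0.
  have [d0 szq ld sq] := cjprod q10.
  have [p0|pn0] := eqVneq p 0.
  + subst p.
    rewrite !mul0r sub0r in F0.
    have E2 : - (q1 * cj q1) * 'X^(b+b+(n+(kp+kp))) = c%:P * 'X^(kp+kp+(kq+kq)).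
      by rewrite -F0 Hq cjM cjX !exprD; ring.
    have : (b+b+(n+(kp+kp)) = kp+kp+(kq+kq))%N.
      by apply: (rhs_nz c); rewrite -E2 coefMXn ltnn subnn coefN oppr_eq0.
    rewrite /n => ?; exfalso; lia.
  + have [a [p1 [Hp p10]]] := decomp pn0.
    have [c0 sz l0 sp] := cjprod p10.
    have E2 : (p1 * cj p1) * 'X^(a+a+(kq+kq)) - (q1 * cj q1) * 'X^(b+b+(n+(kp+kp)))
        = c%:P * 'X^(kp+kp+(kq+kq)).
      by rewrite -F0 Hp Hq !cjM !cjX !exprD; ring.
    exfalso; have [lt|gt|eq] := ltngtP (a+a+(kq+kq)) (b+b+(n+(kp+kp))).
    * apply: (key c0 d0 l0 ld lt _ E2).
      by rewrite sz szq; apply/eqP; rewrite /n; lia.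
    * apply: (key d0 c0 ld l0 gt _ (c := - c) (w := (kp+kp+(kq+kq))%N)).
        by rewrite sz szq; apply/eqP; rewrite /n; lia.
      by rewrite polyCN mulNr -E2 opprB.
    * move: eq; rewrite /n; lia.
Qed.
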